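(* Let $T$ be a tree rooted at a vertex $v$ such that every vertex $u\in V(T)\setminus\{v\}$ satisfies $d_T(u)\le 2$. Then (a) $v\in\mathcal{A}(T)$ if and only if $|C^2(v)|=0$ and $|C^1(v)|\le 1$; (b) $v\in\mathcal{N}(T)$ if and only if $|C^2(v)|=2$ or $|C^1(v)|+|C^2(v)|\ge 3$.
   Context: All graphs are finite, simple and undirected. A dissociation set of a graph $G$ is a set $F\subseteq V(G)$ such that $G[F]$ has maximum degree at most $1$; a maximum dissociation set is one of maximum cardinality. $\mathcal{A}(G)$ is the set of vertices of $G$ contained in every maximum dissociation set of $G$, and $\mathcal{N}(G)$ is the set of vertices of $G$ contained in no maximum dissociation set of $G$. In a tree $T$ rooted at $v$, $C(v)$ denotes the set of children of $v$, and for a vertex $w$, $T_w$ denotes the subtree induced by $w$ and all its descendants. Under the hypothesis that all non-root vertices have degree at most $2$, for each child $w$ of $v$ the subtree $T_w$ is a path having $w$ as an end vertex. For $i\in\{0,1,2\}$, $C^i(v)$ denotes the set of children $w\in C(v)$ such that the number of vertices of the path $T_w$ is congruent to $i$ modulo $3$. *)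

(* Defs.v *)
From mathcomp Require Import all_boot.
Set Implicit Arguments. Unset Strict Implicit. Unset Printing Implicit Defensive.

Definition simple_graph (T : finType) (e : rel T) : Prop :=
  symmetric e /\ irreflexive e.

Definition nbhd (T : finType) (e : rel T) (u : T) : {set T} := [set y | e u y].
Definition deg (T : finType) (e : rel T) (u : T) : nat := #|nbhd e u|.

Definition is_tree (T : finType) (e : rel T) : Prop :=
  simple_graph e /\
  (forall x y : T, connect e x y) /\
  ~ (exists c : seq T, 3 <= size c /\ uniq c /\ cycle e c).

Definition dissociation (T : finType) (e : rel T) (F : {set T}) : Prop :=
  forall x, x \in F -> #|[set y in F | e x y]| <= 1.

Definition max_dissociation (T : finType) (e : rel T) (F : {set T}) : Prop :=
  dissociation e F /\ forall F' : {set T}, dissociation e F' -> #|F'| <= #|F|.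

(* A(G): vertices lying in every maximum dissociation set. *)
Definition in_all_max_diss (T : finType) (e : rel T) (x : T) : Prop :=
  forall F : {set T}, max_dissociation e F -> x \in F.

(* N(G): vertices lying in no maximum dissociation set. *)
Definition in_no_max_diss (T : finType) (e : rel T) (x : T) : Prop :=
  forall F : {set T}, max_dissociation e F -> x \notin F.

Definition children_root (T : finType) (e : rel T) (v : T) : {set T} := nbhd e v.

(* For a child w of the root v, T_w (w and its descendants) is the set of
   vertices reachable from w in T - v. *)
Definition avoid_rel (T : finType) (e : rel T) (v : T) : rel T :=
  [rel x y | [&& e x y, x != v & y != v]].

Definition subtree_root_child (T : finType) (e : rel T) (v w : T) : {set T} :=
  [set u | connect (avoid_rel e v) w u].

Definition Ci (T : finType) (e : rel T) (v : T) (i : nat) : {set T} :=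
  [set w in children_root e v | #|subtree_root_child e v w| %% 3 == i].

(* Main.v *)
Require Import Defs.
From mathcomp Require Import all_boot.
From mathcomp Require Import zify.
Set Implicit Arguments. Unset Strict Implicit. Unset Printing Implicit Defensive.
Definition f n := n - n %/ 3.
Definition nt3 (bs : seq bool) := forall i, ~~ [&& nth false bs i, nth false bs i.+1 & nth false bs i.+2].
Lemma nt3_cons b bs : nt3 (b :: bs) -> nt3 bs.
Proof. by move=> h i; exact: (h i.+1). Qed.
Lemma nt3_bound bs : nt3 bs -> count id bs <= f (size bs).
Proof.
have [n] := ubnP (size bs); elim: n bs => [|n IH] [|a [|b [|c r]]] //=; rewrite ?ltnS => hs h3.
- by clear h3; case: a; rewrite /f.
- by clear h3; case: a; case: b; rewrite /f.
- have hr : nt3 r by do 3 apply: nt3_cons; exact: h3.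
  have := IH r (leq_trans (leqnSn _) (ltnW hs)) hr.
  have := h3 0; rewrite /=.
  rewrite /f; move=> H1 H2; clear h3 hr; move: H1 H2; case: a; case: b; case: c => //= _; lia.
Qed.
Lemma nt3_bound0 bs : nt3 bs -> ~~ nth false bs 0 -> count id bs <= f (size bs - 1).
Proof. case: bs => [|[] t] //= /nt3_cons h _. by rewrite subn1 /=; exact: nt3_bound. Qed.
Lemma nt3_bound1 bs : nt3 bs -> nth false bs 0 -> ~~ nth false bs 1 -> count id bs <= 1 + f (size bs - 2).
Proof.
case: bs => [|a [|b t]] //= h -> //= nb.
rewrite (negbTE nb) subn2 /= add1n add0n ltnS; apply: nt3_bound; by do 2 apply: nt3_cons; exact: h.
Qed.
Definition cnt r l := count (fun i => i %% 3 != r) (iota 0 l).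
Lemma cntS r l : cnt r l.+1 = cnt r l + (l %% 3 != r).
Proof. by rewrite /cnt -[l.+1]addn1 iotaD count_cat /= addn0 add0n. Qed.
Lemma cnt2 l : cnt 2 l = f l.
Proof. elim: l => [|l IH] //; rewrite cntS IH /f; case: eqP; lia. Qed.
Lemma cnt0 l : cnt 0 l = f (l - 1).
Proof. elim: l => [|l IH] //; rewrite cntS IH /f; case: eqP; lia. Qed.
Lemma cnt1 l : 0 < l -> cnt 1 l = 1 + f (l - 2).
Proof. elim: l => [|l IH] // _; rewrite cntS; case: l IH => [|l] IH; first by []. rewrite IH // /f; case: eqP; lia. Qed.
Lemma fa l : 0 < l -> f l = f l.-1 + (l %% 3 != 0). Proof. rewrite /f. case: eqP; lia. Qed.
Lemma fb l : 0 < l -> 1 + f (l - 2) <= f (l - 1) + (l %% 3 == 1). Proof. rewrite /f. case: eqP; lia. Qed.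
Lemma fc l : 0 < l -> l %% 3 == 1 -> 1 + f (l - 2) = f (l - 1) + 1. Proof. rewrite /f => ? /eqP; lia. Qed.
Lemma fd l : (l %% 3 != 0) = (l %% 3 == 1) + (l %% 3 == 2) :> nat. Proof. case: eqP; case: eqP; case: eqP => //=; lia. Qed.
Lemma res3 i r : r <= 2 -> i %% 3 <> r -> i.+1 %% 3 <> r -> i.+2 %% 3 <> r -> False.
Proof. lia. Qed.
Lemma arA X c1 c2 : (X + c1 + c2 < 1 + X + (0 < c1)) <-> (c2 = 0 /\ c1 <= 1).
Proof. case: (posnP c1) => [->|h]; rewrite ?h /=; split; lia. Qed.
Lemma arN X c1 c2 : (1 + X + (0 < c1) < X + c1 + c2) <-> (c2 = 2 \/ 3 <= c1 + c2).
Proof. case: (posnP c1) => [->|h]; rewrite ?h /=; split; lia. Qed.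


Section Cyc.
Variables (T : finType) (e : rel T).
Lemma cycle_mk (g : nat -> T) n :
  (forall k, k < n -> e (g k) (g k.+1)) -> e (g n) (g 0) -> cycle e (mkseq g n.+1).
Proof.
move=> he hl; rewrite /mkseq /= rcons_path.
have hn : forall i, i <= n -> nth (g 0) (g 0 :: map g (iota 1 n)) i = g i.
  by case=> [|i] //= hi; rewrite (nth_map 0) ?size_iota // nth_iota.
apply/andP; split.
  apply/(pathP (g 0)) => i; rewrite size_map size_iota => hi.
  rewrite hn ?(ltnW hi) // (nth_map 0) ?size_iota // nth_iota //; exact: he.
by rewrite (last_nth (g 0)) size_map size_iota hn.
Qed.

Lemma no_cyc (g : nat -> T) n :
  ~ (exists c : seq T, 3 <= size c /\ uniq c /\ cycle e c) ->
  1 < n -> {in gtn n.+1 &, injective g} ->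
  (forall k, k < n -> e (g k) (g k.+1)) -> ~~ e (g n) (g 0).
Proof.
move=> noc hn hinj he; apply/negP => hl; apply: noc; exists (mkseq g n.+1).
split; first by rewrite size_mkseq.
split; first exact/mkseq_uniqP.
exact: cycle_mk.
Qed.
End Cyc.


Lemma card_sum (T : finType) (B : {set T}) (P : pred T) :
  #|[set w in B | P w]| = \sum_(w in B) P w.
Proof.
rewrite -sum1_card big_mkcond /= [RHS]big_mkcond /=; apply: eq_bigr => u _.
by rewrite !inE; case: (u \in B); case: (P u).
Qed.

Lemma sum_count (T : finType) (s : seq T) (P : pred T) : uniq s ->
  \sum_u ((u \in s) && P u) = count P s.
Proof.
move=> hu; rewrite -size_filter -(card_uniqP (filter_uniq P hu)) -sum1_card [RHS]big_mkcond /=.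
apply: eq_bigr => u _; rewrite mem_filter andbC; by case: (_ && _).
Qed.

Section Spider.
Variables (T : finType) (e : rel T) (v : T).
Hypotheses (esym : symmetric e) (eirr : irreflexive e)
  (econ : forall x y, connect e x y)
  (noc : ~ exists c : seq T, 3 <= size c /\ uniq c /\ cycle e c)
  (hdeg : forall u, u != v -> deg e u <= 2).

Local Notation A := (avoid_rel e v).

Lemma Asym : symmetric A.
Proof. move=> x y; rewrite /avoid_rel /= esym. by case: (x != v); case: (y != v); rewrite ?andbF ?andbT. Qed.

Definition legP w s := [/\ path A w s, uniq (w :: s) & forall y, A (last w s) y -> y \in w :: s].

Lemma leg_exists w : exists s, legP w s.
Proof.
suff H : forall n s, #|T| - size s <= n -> path A w s -> uniq (w :: s) -> exists s', legP w s'.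
  by apply: (H #|T| [::]) => //; rewrite subn0.
elim=> [|n IH] s hn hp hu;
  (case: (boolP [exists y, A (last w s) y && (y \notin w :: s)]) => [/existsP [y /andP [hy hny]]|hno];
  last by exists s; split => // y hy; apply: contraR hno => hny; apply/existsP; exists y; rewrite hy).
- have hu' : uniq (rcons (w :: s) y) by rewrite rcons_uniq hny.
  have := max_card (mem (rcons (w :: s) y)); rewrite (card_uniqP hu') size_rcons /=.
  move: hn => h1 h2; exfalso; rewrite leqn0 subn_eq0 in h1.
  by have := leq_ltn_trans h1 (ltnW h2); rewrite ltnn.

- apply: (IH (rcons s y)).
  + rewrite size_rcons; move: hn; lia.
  + by rewrite rcons_path hp.
  + by have : uniq (rcons (w :: s) y) by rewrite rcons_uniq hny.
Qed.

Section Leg.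
Variables (w : T) (s : seq T).
Hypotheses (hw : e v w) (hs : legP w s).
Local Notation q := (w :: s).
Local Notation a i := (nth v q i).

Lemma wnv : w != v. Proof. by apply: contraTneq hw => ->; rewrite eirr. Qed.

Lemma L_A i : i.+1 < size q -> A (a i) (a i.+1).
Proof. case: hs => hp _ _ hi; move/(pathP v): hp => hp; exact: hp. Qed.

Lemma L_e i : i.+1 < size q -> e (a i) (a i.+1).
Proof. by move/L_A => /= /andP []. Qed.

Lemma L_nv x : x \in q -> x != v.
Proof.
move=> hx; rewrite -(nth_index v hx); case: (index x q) (index_mem x q) => [|i]; first by rewrite /= wnv.
by rewrite hx => /L_A /= /and3P [].
Qed.

Lemma L_inj : {in gtn (size q) &, injective (fun i => a i)}.
Proof. case: hs => _ hu _ i j hi hj /eqP; by rewrite nth_uniq // => /eqP. Qed.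

Lemma L_chord i j : i < size q -> j < size q -> e (a i) (a j) -> (j == i.+1) || (i == j.+1).
Proof.
wlog hij : i j / i <= j.
  move=> H hi hj he; case: (leqP i j) => [/H|/ltnW /H]; first exact.
  by move=> /(_ hj hi); rewrite esym orbC => /(_ he).
move=> hi hj he; rewrite /= in hi hj; rewrite leq_eqVlt in hij; case/orP: hij => [/eqP hij|hij].
  by move: he; rewrite hij eirr.
case: (ltngtP j i.+1) => // [|hj1]; first by rewrite ltnS leqNgt hij.
suff : ~~ e (a (i + (j - i))) (a (i + 0)) by rewrite addn0 subnKC ?(ltnW hij) // esym he.
apply: (@no_cyc T e (fun k => a (i + k)) (j - i) noc).
- lia.
- move=> k k' hk hk' h; have : i + k = i + k'.
    apply: L_inj => //; rewrite inE /=; move: hk hk'; rewrite !inE /=; lia.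
  lia.
- move=> k hk; rewrite addnS; apply: L_e; rewrite /=; lia.
Qed.


Lemma L_mem i : i < size q -> a i \in q.
Proof. exact: mem_nth. Qed.

Lemma L_v j : j < size q -> e v (a j) -> j = 0.
Proof.
case: j => [|j] // hj he; exfalso; rewrite /= in hj.
suff : ~~ e ((fun k => if k is k'.+1 then a k' else v) j.+2) ((fun k => if k is k'.+1 then a k' else v) 0).
  by rewrite /= esym he.
apply: (@no_cyc T e (fun k => if k is k'.+1 then a k' else v) j.+2 noc) => //.
- move=> [|k] [|k'] hk hk' //=; move: hk hk'; rewrite !inE /= => hk hk'.
  + move=> h; have hk'' : k' < size q by rewrite /=; lia.
    by move: (L_nv (L_mem hk'')); rewrite -h eqxx.
  + move=> h; have hk'' : k < size q by rewrite /=; lia.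
    by move: (L_nv (L_mem hk'')); rewrite h eqxx.
  + move=> h; have : k = k' by apply: L_inj => //; rewrite inE /=; lia.
    by move=> ->.
- move=> [|k] hk //=; apply: L_e => /=; lia.
Qed.

Lemma L_last : last w s = a (size s).
Proof. by rewrite (last_nth v). Qed.

Lemma L_step z y : z \in q -> A z y -> y \in q.
Proof.
move=> hz hzy; have hzi := nth_index v hz.
have hi : index z q < size q by rewrite index_mem.
case: hs => _ hu hsat.
have [hlast|hlt] : index z q = size s \/ (index z q).+1 < size q.
  by move: hi; rewrite /=; lia.
  by apply: hsat; rewrite L_last -hlast hzi.
apply/negPn/negP => hny.
have hzv : z != v by exact: L_nv.
have := hdeg hzv; rewrite /deg.
set i := index z q in hzi hi hlt.
pose b := if i is i'.+1 then a i' else v.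
have hb : e z b.
  rewrite /b -hzi; case: (i) hlt => [|i'] hlt' /=; first by rewrite esym.
  rewrite esym; apply: L_e; rewrite /=; move: hlt'; rewrite /=; lia.
have hbq : b != a i.+1.
  rewrite /b; case: (i) hlt => [|i'] hlt'.
    by rewrite eq_sym; apply: L_nv; apply: L_mem.
  apply/negP => /eqP /L_inj; rewrite !inE /= => h.
  have : i' = i'.+2 by apply: h; move: hlt'; rewrite /=; lia.
  lia.
have hyb : y != b.
  rewrite /b; case: (i) hlt => [|i'] hlt'; first by case/and3P: hzy.
  by apply: contra hny => /eqP ->; apply: L_mem; move: hlt'; rewrite /=; lia.
have hya : y != a i.+1 by apply: contra hny => /eqP ->; apply: L_mem.
have hsub : y |: (a i.+1 |: [set b]) \subset nbhd e z.
  apply/subsetP => x; rewrite !inE => /or3P [] /eqP ->.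
  - by case/and3P: hzy.
  - by rewrite -{1}hzi; apply: L_e.
  - exact: hb.
have := subset_leq_card hsub; rewrite !cardsU1 cards1 !inE negb_or hya hyb eq_sym hbq /=.
move=> h1 h2; have := leq_trans h1 h2; by [].
Qed.

Lemma L_conn i : i < size q -> connect A w (a i).
Proof.
elim: i => [|i IH] hi; first exact: connect0.
apply: connect_trans (IH (ltnW hi)) _; apply: connect1; exact: L_A.
Qed.

Lemma L_sub u : (u \in q) = connect A w u.
Proof.
apply/idP/idP.
  by move=> hu; rewrite -(nth_index v hu); apply: L_conn; rewrite index_mem.
case/connectP => p hp ->.
suff H : forall z, z \in q -> forall p, path A z p -> last z p \in q.
  by apply: H hp; rewrite mem_head.
move=> z hz p0; elim: p0 z hz => [|y p0 IH] z hz //= /andP [hzy hp0].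
apply: IH hp0; exact: L_step hzy.
Qed.

End Leg.

Section Glob.
Variable Q : T -> seq T.
Hypothesis hQ : forall w, e v w -> legP w (Q w).
Local Notation q w := (w :: Q w).
Local Notation C := (nbhd e v).

Lemma G_uniq w : e v w -> uniq (q w).
Proof. by move/hQ => []. Qed.

Lemma G_cover u : u != v -> exists2 w, e v w & u \in q w.
Proof.
move=> huv; case/connectP: (econ v u) => p hp hu.
suff : last v p = v \/ exists2 w, e v w & last v p \in q w.
  by rewrite -hu => -[h|//]; move: huv; rewrite h eqxx.
suff H : forall z p0, (z = v \/ exists2 w, e v w & z \in q w) -> path e z p0 ->
    last z p0 = v \/ exists2 w, e v w & last z p0 \in q w by apply: H hp; left.
move=> z p0; elim: p0 z => [|y p0 IH] z //= hz /andP [hzy hp0]; apply: IH hp0.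
case: (eqVneq y v) => [->|hyv]; first by left.
right; case: hz => [hz|[w hw hzw]].
  by exists y; rewrite ?mem_head // -hz.
exists w => //; apply: (L_step hw (hQ hw) hzw); rewrite /avoid_rel /= hzy hyv (L_nv hw (hQ hw) hzw).
by rewrite andbT.
Qed.

Lemma G_disj w w' u : e v w -> e v w' -> u \in q w -> u \in q w' -> w = w'.
Proof.
move=> hw hw' hu hu'.
have c1 : connect A w u by rewrite -(L_sub hw (hQ hw)).
have c2 : connect A w' u by rewrite -(L_sub hw' (hQ hw')).
have : connect A w w' by rewrite (connect_trans c1) // (sym_connect_sym Asym) c2.
rewrite -(L_sub hw (hQ hw)) => hw'q.
have hi := nth_index v hw'q.
have : index w' (q w) = 0.
  apply: (L_v hw (hQ hw)); by rewrite ?index_mem ?hi.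
by move=> h; rewrite h in hi; rewrite -hi.
Qed.

Lemma G_nbr w x y : e v w -> x \in q w -> e x y -> y = v \/ y \in q w.
Proof.
move=> hw hx hxy; case: (eqVneq y v) => [->|hyv]; [by left | right].
apply: (L_step hw (hQ hw) hx); by rewrite /avoid_rel /= hxy hyv (L_nv hw (hQ hw) hx).
Qed.

Lemma card_sub w : e v w -> #|subtree_root_child e v w| = size (q w).
Proof.
move=> hw; rewrite -(card_uniqP (G_uniq hw)); apply: eq_card => u.
by rewrite /subtree_root_child inE (L_sub hw (hQ hw)).
Qed.


Lemma vnq w : e v w -> v \notin q w.
Proof. by move=> hw; apply/negP => /(L_nv hw (hQ hw)); rewrite eqxx. Qed.

Lemma decomp (F : {set T}) : #|F| = (v \in F) + \sum_(w in C) count (mem F) (q w).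
Proof.
rewrite -sum1_card big_mkcond (bigD1 v) //.
congr (_ + _).
have h1 : forall u, u != v -> (if u \in F then 1 else 0) = \sum_(w in C) ((u \in q w) && (u \in F)).
  move=> u huv; case: (G_cover huv) => w0 hw0 hu0.
  rewrite (bigD1 w0) /=; last by rewrite inE.
  rewrite hu0 big1 ?addn0; first by case: (u \in F).
  move=> w /andP [hw hne]; rewrite inE in hw.
  suff : u \notin q w by move/negbTE ->.
  apply/negP => huw; move: hne; by rewrite (G_disj hw0 hw hu0 huw) eqxx.
rewrite (eq_bigr _ h1) exchange_big; apply: eq_bigr => w hw; rewrite inE in hw.
rewrite -(sum_count _ (G_uniq hw)) [RHS](bigD1 v) // (negbTE (vnq hw)) /=.
by apply: eq_bigl => u.
Qed.


Lemma nth_in (F : {set T}) w i : nth false (map (mem F) (q w)) i -> i < size (q w).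
Proof. by case: ltnP => // hle; rewrite nth_default ?size_map. Qed.

Lemma D_nt3 (F : {set T}) w : dissociation e F -> e v w -> nt3 (map (mem F) (q w)).
Proof.
move=> hd hw i; apply/negP => /and3P [h0 h1 h2].
have hi2 := nth_in h2.
rewrite !(nth_map v) in h0 h1 h2; try lia.
have h0' : nth v (q w) i \in F := h0.
have h1' : nth v (q w) i.+1 \in F := h1.
have h2' : nth v (q w) i.+2 \in F := h2.
have := hd _ h1'.
have hsub : nth v (q w) i |: [set nth v (q w) i.+2] \subset [set y in F | e (nth v (q w) i.+1) y].
  apply/subsetP => x; rewrite !inE => /orP [] /eqP ->.
    by rewrite h0' esym (L_e (hQ hw) (ltnW hi2)).
  by rewrite h2' (L_e (hQ hw) hi2).
apply/negP; rewrite -ltnNge; apply: leq_trans (subset_leq_card hsub).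
have hne : nth v (q w) i != nth v (q w) i.+2.
  apply/negP => /eqP h; have := L_inj (hQ hw); move=> /(_ i i.+2); rewrite !inE.
  have hi0 : i < size (q w) by lia.
  move=> /(_ hi0 hi2 h) H; lia.
by rewrite cardsU1 cards1 inE hne.
Qed.

Lemma D_partner (F : {set T}) w : dissociation e F -> e v w -> v \in F -> w \in F ->
  ~~ nth false (map (mem F) (q w)) 1.
Proof.
move=> hd hw hv hwF; apply/negP => h1.
have hi := nth_in h1; rewrite (nth_map v) // in h1; have {h1}h1 : nth v (q w) 1 \in F := h1.
have := hd _ hwF.
have hsub : v |: [set nth v (q w) 1] \subset [set y in F | e w y].
  apply/subsetP => x; rewrite !inE => /orP [] /eqP ->.
    by rewrite hv esym.
  by rewrite h1 (L_e (hQ hw) hi).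
apply/negP; rewrite -ltnNge; apply: leq_trans (subset_leq_card hsub).
rewrite cardsU1 cards1 inE eq_sym (L_nv hw (hQ hw)) //; exact: mem_nth.
Qed.

Lemma D_root (F : {set T}) : dissociation e F -> v \in F -> #|[set w in C | w \in F]| <= 1.
Proof.
move=> hd hv; have := hd _ hv; congr (_ <= _); apply: eq_card => x; by rewrite !inE andbC.
Qed.

Lemma countF (F : {set T}) w : count (mem F) (q w) = count id (map (mem F) (q w)).
Proof. by rewrite count_map. Qed.

Lemma UB0 (F : {set T}) : dissociation e F -> v \notin F ->
  #|F| <= \sum_(w in C) f (size (q w)).
Proof.
move=> hd hv; rewrite decomp (negbTE hv) add0n; apply: leq_sum => w hw; rewrite inE in hw.
rewrite countF -(size_map (mem F)); exact: nt3_bound (D_nt3 hd hw).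
Qed.

Lemma UB1 (F : {set T}) : dissociation e F -> v \in F ->
  #|F| <= 1 + \sum_(w in C) f (size (q w) - 1) + (0 < #|Ci e v 1|).
Proof.
move=> hd hv; rewrite decomp hv -addnA leq_add2l.
apply: (@leq_trans (\sum_(w in C) (f (size (q w) - 1) + ((w \in F) && (size (q w) %% 3 == 1))))).
  apply: leq_sum => w hw; rewrite inE in hw; rewrite countF.
  case: (boolP (w \in F)) => hwF.
    apply: leq_trans (nt3_bound1 (D_nt3 hd hw) _ (D_partner hd hw hv hwF)) _ => //.
    by rewrite size_map /= fb.
  rewrite addn0; apply: leq_trans (nt3_bound0 (D_nt3 hd hw) _) _ => //.
  by rewrite size_map.
rewrite big_split /= leq_add2l -card_sum.
case: (posnP #|Ci e v 1|) => hc /=.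
  rewrite leqn0 cards_eq0; apply/eqP/setP => x; rewrite !inE.
  apply/negP => /and3P [hx _ hl]; move: hc => /eqP; rewrite cards_eq0 => /eqP /setP /(_ x).
  by rewrite !inE hx card_sub // hl.
apply: leq_trans (D_root hd hv); apply: subset_leq_card; apply/subsetP => x; rewrite !inE.
by case/and3P => -> ->.
Qed.


Definition Fc (b : bool) (r : T -> nat) : {set T} :=
  [set u | if u == v then b else [exists w, [&& e v w, u \in q w & index u (q w) %% 3 != r w]]].

Lemma Fc_v b r : (v \in Fc b r) = b.
Proof. by rewrite inE eqxx. Qed.

Lemma Fc_in b r w x : e v w -> x \in q w -> (x \in Fc b r) = (index x (q w) %% 3 != r w).
Proof.
move=> hw hx; rewrite inE (negbTE (L_nv hw (hQ hw) hx)); apply/existsP/idP.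
  case=> w' /and3P [hw' hx' hr]; by rewrite (G_disj hw hw' hx hx').
by move=> hr; exists w; rewrite hw hx hr.
Qed.

Lemma Fc_count b r w : e v w -> count (mem (Fc b r)) (q w) = cnt (r w) (size (q w)).
Proof.
move=> hw; rewrite -[in LHS](mkseq_nth v (q w)) /mkseq count_map /cnt; apply: eq_in_count => i.
rewrite mem_iota add0n => /andP [_ hi] /=.
by rewrite (Fc_in b r hw) ?mem_nth // index_uniq // G_uniq.
Qed.

Lemma Fc_card b r : #|Fc b r| = b + \sum_(w in C) cnt (r w) (size (q w)).
Proof.
rewrite decomp Fc_v; congr (_ + _); apply: eq_bigr => w; rewrite inE => hw; exact: Fc_count.
Qed.

Lemma nbr_info b r w x y : e v w -> x \in q w -> y \in Fc b r -> e x y ->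
  (y = v /\ index x (q w) = 0 /\ b) \/
  (y \in q w /\ ((index y (q w) == (index x (q w)).+1) || (index x (q w) == (index y (q w)).+1))
   /\ index y (q w) %% 3 != r w).
Proof.
move=> hw hx hy hxy; case: (G_nbr hw hx hxy) => [hyv|hyq].
  left; split => //; split; last by move: hy; rewrite hyv Fc_v.
  apply: (L_v hw (hQ hw)); first by rewrite index_mem.
  by rewrite nth_index // esym -hyv.
right; split => //; split; last by rewrite -(Fc_in b r hw hyq).
apply: (L_chord hw (hQ hw)); rewrite ?index_mem ?nth_index //.
Qed.

Lemma Fc_diss (b : bool) (r : T -> nat) : (forall w, r w <= 2) -> (b -> forall w, r w <= 1) ->
  (b -> forall w w', e v w -> e v w' -> r w = 1 -> r w' = 1 -> w = w') ->
  dissociation e (Fc b r).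
Proof.
move=> hr2 hr1 hru x hx; apply/card_le1_eqP => y z; rewrite [y \in _]in_set [z \in _]in_set.
move=> /andP [hy hxy] /andP [hz hxz].
suff hyz : y = z by rewrite hyz.
case: (eqVneq x v) => [hxv|hxv].
  subst x; rewrite Fc_v in hx.
  have key : forall u, u \in Fc b r -> e v u -> r u = 1.
    move=> u hu hvu; move: hu; rewrite (Fc_in b r hvu (mem_head _ _)) /= eqxx /=.
    have := hr1 hx u; case: (r u) => [|[|]] //.
  by apply: (hru hx y z hxy hxz); apply: key.
case: (G_cover hxv) => w hw hxq.
have hxF : index x (q w) %% 3 != r w by rewrite -(Fc_in b r hw hxq).
have hr2w := hr2 w.
case: (nbr_info hw hxq hy hxy) => [[hyv [hi0 hb]]|[hyq [hyi hym]]];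
case: (nbr_info hw hxq hz hxz) => [[hzv [hi0z hbz]]|[hzq [hzi hzm]]].
- by rewrite hyv hzv.
- exfalso; move: hzi; rewrite hi0 => /orP [] /eqP hk //.
  move: hxF hzm (hr1 hb w); rewrite hk hi0; case: (r w) => [|[|n]] //.
- exfalso; move: hyi; rewrite hi0z => /orP [] /eqP hk //.
  move: hxF hym (hr1 hbz w); rewrite hk hi0z; case: (r w) => [|[|n]] //.
- rewrite -(nth_index v hyq) -(nth_index v hzq); congr nth.
  move: (index x (q w)) (index y (q w)) (index z (q w)) hxF hym hzm hyi hzi.
  move=> i j k /eqP hxF /eqP hym /eqP hzm /orP [] /eqP hyi /orP [] /eqP hzi.
  + by rewrite hyi hzi.
  + by subst j i; case: (res3 hr2w hzm hxF hym).
  + by subst k i; case: (res3 hr2w hym hxF hzm).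
  + by move: hyi; rewrite hzi => -[].
Qed.


Lemma Ci_sum i : #|Ci e v i| = \sum_(w in C) (size (q w) %% 3 == i).
Proof.
rewrite /Ci /children_root card_sum; apply: eq_bigr => w; rewrite inE => hw.
by rewrite card_sub.
Qed.

Lemma main :
  (in_all_max_diss e v <-> (#|Ci e v 2| = 0 /\ #|Ci e v 1| <= 1)) /\
  (in_no_max_diss e v <-> (#|Ci e v 2| = 2 \/ 3 <= #|Ci e v 1| + #|Ci e v 2|)).
Proof.
set c1 := #|Ci e v 1|; set c2 := #|Ci e v 2|.
set X := \sum_(w in C) f (size (q w) - 1).
have hS0 : \sum_(w in C) f (size (q w)) = X + c1 + c2.
  rewrite /c1 /c2 !Ci_sum /X -!big_split /=; apply: eq_bigr => w _.
  by rewrite -addnA -fd (fa (ltn0Sn _)) subn1.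
set S0 := \sum_(w in C) f (size (q w)).
set S1 := 1 + X + (0 < c1).
have ach0 : exists F0, [/\ dissociation e F0, v \notin F0 & #|F0| = S0].
  exists (Fc false (fun _ => 2)); split.
  - by apply: Fc_diss.
  - by rewrite Fc_v.
  - by rewrite Fc_card add0n; apply: eq_bigr => w _; rewrite cnt2.
have ach1 : exists F1, [/\ dissociation e F1, v \in F1 & #|F1| = S1].
  case: (posnP c1) => hc1.
    exists (Fc true (fun _ => 0)); split.
    - by apply: Fc_diss.
    - by rewrite Fc_v.
    - by rewrite Fc_card /S1 hc1 /= addn0; congr (_ + _); apply: eq_bigr => w _; rewrite cnt0.
  move: (hc1); rewrite card_gt0 => /set0Pn [p hp].
  have hp' := hp; rewrite /Ci inE /children_root inE in hp'; case/andP: hp' => hvp hp3.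
  rewrite card_sub // in hp3.
  exists (Fc true (fun w => w == p)); split.
  - apply: Fc_diss => // [w|_ w|_ w w' _ _].
    + by case: (w == p).
    + by case: (w == p).
    + by case: eqP => // -> _; case: eqP.
  - by rewrite Fc_v.
  - rewrite Fc_card /S1 hc1 /= -addnA; congr (_ + _).
    rewrite (eq_bigr (fun w => f (size (q w) - 1) + (w == p))).
      rewrite big_split /= /X; congr (_ + _).
      rewrite (bigD1 p); last by rewrite inE.
      by rewrite eqxx big1 ?addn0 // => w /andP [_ /negbTE ->].
    move=> w hw; case: eqP => [->|_]; last by rewrite cnt0 addn0.
    by rewrite cnt1 // fc.
have hmax0 : S1 <= S0 -> forall F, dissociation e F -> #|F| <= S0.
  move=> hle F hF; case: (boolP (v \in F)) => hv; last exact: UB0 hF hv.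
  exact: leq_trans (UB1 hF hv) hle.
have hmax1 : S0 <= S1 -> forall F, dissociation e F -> #|F| <= S1.
  move=> hle F hF; case: (boolP (v \in F)) => hv; first exact: UB1 hF hv.
  exact: leq_trans (UB0 hF hv) hle.
split; split.
- move=> H; apply/(arA X); rewrite -hS0 -/S1 ltnNge; apply/negP => hle.
  case: ach0 => F0 [hd hv hc].
  have : max_dissociation e F0.
    split => // F' hF'; rewrite hc; exact: hmax0 hle F' hF'.
  by move/H; rewrite (negbTE hv).
- move=> /(arA X); rewrite -hS0 -/S1 => hlt F [hd hmax]; apply/negPn/negP => hv.
  case: ach1 => F1 [hd1 hv1 hc1].
  have := hmax F1 hd1; rewrite hc1 => h1; have := UB0 hd hv.
  move: hlt h1; rewrite -/S0; lia.
- move=> H; apply/(arN X); rewrite -hS0 -/S1 ltnNge; apply/negP => hle.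
  case: ach1 => F1 [hd hv hc].
  have : max_dissociation e F1.
    split => // F' hF'; rewrite hc; exact: hmax1 hle F' hF'.
  by move/H; rewrite hv.
- move=> /(arN X); rewrite -hS0 -/S1 => hlt F [hd hmax]; apply/negP => hv.
  case: ach0 => F0 [hd0 hv0 hc0].
  have := hmax F0 hd0; rewrite hc0 => h0; have := UB1 hd hv.
  move: hlt h0; rewrite -/S1; lia.
Qed.

End Glob.
End Spider.

Theorem theorem2p1 (T : finType) (e : rel T) (v : T) :
  is_tree e ->
  (forall u : T, u != v -> deg e u <= 2) ->
  (in_all_max_diss e v <-> (#|Ci e v 2| = 0 /\ #|Ci e v 1| <= 1)) /\
  (in_no_max_diss e v <-> (#|Ci e v 2| = 2 \/ 3 <= #|Ci e v 1| + #|Ci e v 2|)).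
Proof.
move=> [[esym eirr] [econ noc]] hdeg.
have : forall w, exists s, e v w -> legP e v w s.
  by move=> w; case: (leg_exists e v w) => s hs; exists s.
case/fin_all_exists => Q hQ.
by apply: (main esym eirr econ noc hdeg hQ).
Qed.
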